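(* Let $q$ be a nonzero complex number and let ${\mathbb A}={\mathbb F}({\rm SP}_q^{2|1})$ be the super-Hopf algebra generated by even $x, y, x^{-1}$ and odd $\theta$ with relations $x\theta=q\theta x$, $\theta y=qy\theta$, $yx=q^{-2}xy$, $\theta^2=q^{1/2}(q-1)yx$, $xx^{-1}={\bf 1}=x^{-1}x$, and Hopf structure $\Delta(x)=x\otimes x$, $\Delta(\theta)=\theta\otimes{\bf 1}+{\bf 1}\otimes\theta$, $\Delta(y)=x^{-1}\otimes y+y\otimes x^{-1}$, $\epsilon(x)=1$, $\epsilon(\theta)=\epsilon(y)=0$, $S(x)=x^{-1}$, $S(\theta)=-\theta$, $S(y)=-xyx$. Let ${\mathbb U}$ be the dual super-Hopf algebra generated by $K$, $\nabla$, $N$, where the dual pairing $\langle\,,\rangle:{\mathbb U}\times{\mathbb A}\to\mathbb C$ is determined on monomials $f=x^k\theta^l y^n$ by $$\langle K,f\rangle = k\,\delta_{l,0}\delta_{n,0},\quad \langle\nabla,f\rangle=\delta_{l,1},\quad \langle N,f\rangle=\delta_{n,1},\quad \langle 1_{\mathbb U},f\rangle=\epsilon_{\mathbb A}(f)=\delta_{k,0}.$$ Then the generators of ${\mathbb U}$ satisfy $$K\nabla=\nabla K,\quad KN=NK,\quad \nabla N=N\nabla,\quad \nabla^2=0 .$$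
   Context: A dual pairing of super bialgebras ${\mathbb U}$ and ${\mathbb A}$ is a bilinear map $\langle\,,\rangle:{\mathbb U}\times{\mathbb A}\to\mathbb C$ with $\langle u,ab\rangle=\langle\Delta_{\mathbb U}(u),a\otimes b\rangle$, $\langle uv,a\rangle=\langle u\otimes v,\Delta_{\mathbb A}(a)\rangle$, $\langle u,1_{\mathbb A}\rangle=\epsilon_{\mathbb U}(u)$, $\langle 1_{\mathbb U},a\rangle=\epsilon_{\mathbb A}(a)$, extended to tensor products by $\langle u\otimes v,a\otimes b\rangle=(-1)^{\tau(v)\tau(a)}\langle u,a\rangle\langle v,b\rangle$, where $\tau$ denotes the $\mathbb Z_2$-grade ($\theta$ and $\nabla$ odd, the other generators even). The product in ${\mathbb U}$ is thus determined by the coproduct of ${\mathbb A}$ via the pairing. Tensor products of superalgebras use the graded product $(a_1\otimes a_2)(a_3\otimes a_4)=(-1)^{\tau(a_2)\tau(a_3)}a_1a_3\otimes a_2a_4$. *)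

(* Defs.v *)
From HB Require Import structures.
From mathcomp Require Import all_boot all_order all_algebra.
From mathcomp Require Import reals Rstruct.
From mathcomp.real_closed Require Import complex.
Set Implicit Arguments. Unset Strict Implicit. Unset Printing Implicit Defensive.
Import Order.TTheory GRing.Theory Num.Theory.
Local Open Scope ring_scope.

Definition Cplx : fieldType := complex Rdefinitions.R.

Section SPq.
Variable F : fieldType.
(* q and a chosen square root s = q^{1/2} *)
Variables q s : F.

(* A PBW monomial x^k theta^l y^n of A, encoded as (k, l, n). *)
Definition mono := (int * bool * nat)%type.
Definition mk (k : int) (l : bool) (n : nat) : mono := (k, l, n).
Definition mexp (m : mono) : int := m.1.1.
Definition mth (m : mono) : bool := m.1.2.
Definition mey (m : mono) : nat := m.2.
Definition mgrade (m : mono) : bool := mth m.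

Definition one : mono := mk 0 false 0.

(* Product of two monomials in A, normal ordered using the relations
   x theta = q theta x, theta y = q y theta, y x = q^-2 x y,
   theta^2 = q^{1/2}(q-1) y x, x x^-1 = 1 = x^-1 x. *)
Definition mono_mul (m1 m2 : mono) : F * mono :=
  let a := mexp m1 in let b := mth m1 in let c := mey m1 in
  let d := mexp m2 in let e := mth m2 in let f := mey m2 in
  let coef := q ^ (- (2%:Z * c%:Z * d)) * q ^ (- ((b : nat)%:Z * d))
              * q ^ (- (c%:Z * (e : nat)%:Z)) in
  if b && e then
    (coef * (s * (q - 1) * q ^ (-2)), mk (a + d + 1) false (c + f).+1)
  else (coef, mk (a + d) (b || e) (c + f)).

(* An element of A (x) A as a formal sum of terms  c * (a (x) b). *)
Definition term := (F * mono * mono)%type.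

(* graded product (a1 (x) a2)(a3 (x) a4) = (-1)^{tau a2 tau a3} a1 a3 (x) a2 a4 *)
Definition term_mul (t1 t2 : term) : term :=
  let: (c1, a1, a2) := t1 in let: (c2, a3, a4) := t2 in
  let: (u, b1) := mono_mul a1 a3 in let: (v, b2) := mono_mul a2 a4 in
  ((-1) ^+ (mgrade a2 && mgrade a3) * c1 * c2 * u * v, b1, b2).

Definition tmul (s1 s2 : seq term) : seq term :=
  [seq term_mul t1 t2 | t1 <- s1, t2 <- s2].

Definition Delta_xk (k : int) : seq term := [:: (1, mk k false 0, mk k false 0)].
Definition Delta_theta : seq term :=
  [:: (1, mk 0 true 0, one); (1, one, mk 0 true 0)].
Definition Delta_y : seq term :=
  [:: (1, mk (-1) false 0, mk 0 false 1); (1, mk 0 false 1, mk (-1) false 0)].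

(* Delta(x^k theta^l y^n) = Delta(x)^k Delta(theta)^l Delta(y)^n,
   Delta being a superalgebra morphism into A (x) A. *)
Definition Delta (m : mono) : seq term :=
  iter (mey m) (fun acc => tmul acc Delta_y)
       (tmul (Delta_xk (mexp m)) (if mth m then Delta_theta else [:: (1, one, one)])).

(* Elements of U are represented by their values <u, f> on the monomial basis.
   Product in U:  <u v, f> = <u (x) v, Delta f>, with
   <u (x) v, a (x) b> = (-1)^{tau v tau a} <u,a><v,b>; [tv] is the grade of v. *)
Definition Ufun := mono -> F.
Definition Umul (u v : Ufun) (tv : bool) : Ufun := fun f =>
  \sum_(t <- Delta f) (-1) ^+ (tv && mgrade t.1.2) * t.1.1 * u t.1.2 * v t.2.

End SPq.

Definition UK {F : fieldType} : Ufun F :=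
  fun f => if (~~ mth f) && (mey f == 0%N) then (mexp f)%:~R else 0.
Definition Unabla {F : fieldType} : Ufun F := fun f => (mth f)%:R.
Definition UN {F : fieldType} : Ufun F := fun f => (mey f == 1%N)%:R.
(* grades: K even, nabla odd, N even *)

(* Main.v *)
Require Import Defs.
From HB Require Import structures.
From mathcomp Require Import all_boot all_order all_algebra ring zify.
Import GRing.Theory.
Local Open Scope ring_scope.

Section Pf.
Variable F : fieldType.
Variables q s : F.

Definition W (acc : seq (term F)) (P : mono -> mono -> F) : F :=
  \sum_(t <- acc) t.1.1 * P t.1.2 t.2.

Definition T (P : mono -> mono -> F) (a b : mono) : F :=
  q ^+ (2 * mey a + mth a)%N * P (mk (mexp a - 1) (mth a) (mey a)) (mk (mexp b) (mth b) (mey b).+1)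
+ q ^+ (2 * mey b + mth b)%N * P (mk (mexp a) (mth a) (mey a).+1) (mk (mexp b - 1) (mth b) (mey b)).

Lemma Ez (z : int) (m : nat) : z = Posz m -> q ^ z = q ^+ m.
Proof. by move=> ->. Qed.

Lemma mm_xinv a : mono_mul q s a (mk (-1) false 0) =
  (q ^+ (2 * mey a + mth a)%N, mk (mexp a - 1) (mth a) (mey a)).
Proof.
case: a => [[k l] n]; rewrite /mono_mul /mexp /mth /mey /= andbF orbF addn0.
congr pair; rewrite (@Ez _ (2*n)); last lia.
rewrite (@Ez _ (l)); last by case: l => /=; lia.
by rewrite (@Ez _ (0)) ?mulr1 -?exprD //; lia.
Qed.

Lemma mm_y a : mono_mul q s a (mk 0 false 1) = (1, mk (mexp a) (mth a) (mey a).+1).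
Proof.
case: a => [[k l] n]; rewrite /mono_mul /mexp /mth /mey /= andbF orbF addn1.
congr pair; last by rewrite addr0.
rewrite (@Ez _ 0); last lia. rewrite (@Ez _ 0); last by case: l => /=; lia.
by rewrite (@Ez _ 0) ?mulr1 //; lia.
Qed.

Lemma mm_base k l : mono_mul q s (mk k false 0) (mk 0 l 0) = (1, mk k l 0).
Proof.
rewrite /mono_mul /mexp /mth /mey /=.
congr pair; last by rewrite addr0.
by rewrite !(@Ez _ (0)) ?mulr1 //; case: l => /=; lia.
Qed.

Lemma W_step acc P : W (tmul q s acc (Delta_y F)) P = W acc (T P).
Proof.
rewrite /W /tmul big_allpairs_dep; apply: eq_bigr => [[[c a] b]] _.
rewrite !big_cons big_nil /= /term_mul !mm_xinv !mm_y /= andbF expr0 /T /=.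
ring.
Qed.

Lemma W_iter n base P :
  W (iter n (fun acc => tmul q s acc (Delta_y F)) base) P = W base (iter n T P).
Proof.
elim: n P => [|n IH] P //=.
by rewrite W_step IH -iterSr.
Qed.

Lemma Umul_W u v tv f : Umul q s u v tv f =
  W (Delta q s f) (fun a b => (-1) ^+ (tv && mgrade a) * u a * v b).
Proof. by rewrite /Umul /W; apply: eq_bigr => t _; ring. Qed.

Lemma Ez0 (z : int) : z = 0 -> q ^ z = 1.
Proof. by move=> ->; rewrite expr0z. Qed.

Lemma W_Delta k l n P : W (Delta q s (mk k l n)) P =
  if l then iter n T P (mk k true 0) (mk k false 0) + iter n T P (mk k false 0) (mk k true 0)
  else iter n T P (mk k false 0) (mk k false 0).
Proof.
rewrite /Delta W_iter; case: l; rewrite /W /tmul /= /mexp /mth /mey /=;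
  do ? (rewrite Ez0; last lia); rewrite ?expr0 ?mul1r ?addr0 ?addn0 !big_cons big_nil /= !mul1r addr0 //.
Qed.


Ltac fin := do 2 rewrite ?mulr0n ?mulr1n ?muln0 ?addn0 ?add0n ?expr0 ?mul1r ?mulr1 ?mulr0 ?mul0r ?addr0 ?add0r ?subr0; try done;
  try (congr (_ %:~R); lia).

Definition P1 : mono -> mono -> F := fun a b => (-1) ^+ (true && mgrade a) * UK a * Unabla b.
Lemma it1 n ka la na kb lb nb : iter n T P1 (mk ka la na) (mk kb lb nb) =
  if ~~ la && (na == 0%N) && lb then (ka - n%:Z)%:~R else 0.
Proof.
elim: n ka la na kb lb nb => [|n IH] ka la na kb lb nb.
  rewrite /= /P1 /UK /Unabla /mgrade /mth /mey /mexp /=.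
  by case: la; case: lb; case: na => [|na] /=; fin.
rewrite iterS /T /mexp /mth /mey /= !IH; clear IH.
by case: la; case: lb; case: na => [|na] /=; fin.
Qed.


Definition P2 : mono -> mono -> F := fun a b => (-1) ^+ (false && mgrade a) * Unabla a * UK b.
Lemma it2 n ka la na kb lb nb : iter n T P2 (mk ka la na) (mk kb lb nb) =
  if la && ~~ lb && (nb == 0%N) then (kb - n%:Z)%:~R else 0.
Proof.
elim: n ka la na kb lb nb => [|n IH] ka la na kb lb nb.
  rewrite /= /P2 /UK /Unabla /mgrade /mth /mey /mexp /=.
  by case: la; case: lb; case: nb => [|nb] /=; fin.
rewrite iterS /T /mexp /mth /mey /= !IH; clear IH.
by case: la; case: lb; case: nb => [|nb] /=; fin.
Qed.

Definition P3 : mono -> mono -> F := fun a b => (-1) ^+ (false && mgrade a) * UK a * UN b.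
Lemma it3 n ka la na kb lb nb : iter n T P3 (mk ka la na) (mk kb lb nb) =
  if ~~ la && (na == 0%N) && (nb + n == 1)%N then (ka - n%:Z)%:~R else 0.
Proof.
elim: n ka la na kb lb nb => [|n IH] ka la na kb lb nb.
  rewrite /= /P3 /UK /UN /mgrade /mth /mey /mexp /= addn0.
  by case: la; case: na => [|na] /=; case: (nb == 1)%N; fin.
rewrite iterS /T /mexp /mth /mey /= !IH addSn addnS.
by case: la; case: na => [|na] /=; case: ((nb + n).+1 == 1)%N; fin.
Qed.

Definition P4 : mono -> mono -> F := fun a b => (-1) ^+ (false && mgrade a) * UN a * UK b.
Lemma it4 n ka la na kb lb nb : iter n T P4 (mk ka la na) (mk kb lb nb) =
  if ~~ lb && (nb == 0%N) && (na + n == 1)%N then (kb - n%:Z)%:~R else 0.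
Proof.
elim: n ka la na kb lb nb => [|n IH] ka la na kb lb nb.
  rewrite /= /P4 /UK /UN /mgrade /mth /mey /mexp /= addn0.
  by case: lb; case: nb => [|nb] /=; case: (na == 1)%N; fin.
rewrite iterS /T /mexp /mth /mey /= !IH addSn addnS.
by case: lb; case: nb => [|nb] /=; case: ((na + n).+1 == 1)%N; fin.
Qed.

Definition P7 : mono -> mono -> F := fun a b => (-1) ^+ (true && mgrade a) * Unabla a * Unabla b.
Lemma it7 n ka la na kb lb nb : ~~ (la && lb) -> iter n T P7 (mk ka la na) (mk kb lb nb) = 0.
Proof.
elim: n ka la na kb lb nb => [|n IH] ka la na kb lb nb H.
  by rewrite /= /P7 /Unabla /mgrade /mth /=; case: la H; case: lb; fin.
by rewrite iterS /T /mexp /mth /mey /= !IH // !mulr0 addr0.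
Qed.


Definition P5 : mono -> mono -> F := fun a b => (-1) ^+ (false && mgrade a) * Unabla a * UN b.
Lemma it5 n ka la na kb lb nb : iter n T P5 (mk ka la na) (mk kb lb nb) =
  if la then (if nb == 1%N then q ^+ (n * (2 + lb)) else if nb == 0%N then
     n%:R * q ^+ (2 * na + 1 + n.-1 * (2 + lb)) else 0) else 0.
Proof.
elim: n ka la na kb lb nb => [|n IH] ka la na kb lb nb.
  rewrite /= /P5 /UN /Unabla /mgrade /mth /mey /mexp /=.
  by case: la; case: nb => [|[|nb]] /=; fin.
rewrite iterS /T /mexp /mth /mey /= !IH; clear IH.
case: la; last by fin.
case: nb => [|[|nb]] /=; last by fin.
  case: n => [|m] /=; first by case: lb; fin.
  rewrite -exprD mulrCA -exprD.
  have -> : (2 * 0 + lb + (2 * na.+1 + 1 + m * (2 + lb)) = 2 * na + 1 + m.+1 * (2 + lb))%N.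
    by case: lb => /=; lia.
  ring.
rewrite mulr0 add0r -exprD; congr (q ^+ _); case: lb => /=; lia.
Qed.

Definition P6 : mono -> mono -> F := fun a b => (-1) ^+ (true && mgrade a) * UN a * Unabla b.
Lemma it6 n ka la na kb lb nb : iter n T P6 (mk ka la na) (mk kb lb nb) =
  if lb then (-1) ^+ la * (if na == 1%N then q ^+ (n * (2 + la)) else if na == 0%N then
     n%:R * q ^+ (2 * nb + 1 + n.-1 * (2 + la)) else 0) else 0.
Proof.
elim: n ka la na kb lb nb => [|n IH] ka la na kb lb nb.
  rewrite /= /P6 /UN /Unabla /mgrade /mth /mey /mexp /=.
  by case: lb; case: na => [|[|na]] /=; fin.
rewrite iterS /T /mexp /mth /mey /= !IH; clear IH.
case: lb; last by fin.
case: na => [|[|na]] /=; last by fin.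
  case: n => [|m] /=; first by case: la; fin; rewrite mulrC.
  rewrite (_ : (2 * nb.+1 + 1 + m * (2 + la) = (2*nb+1 + m*(2+la)) + 2)%N); last by nia.
  rewrite (_ : (2 * nb + 1 + m.+1 * (2 + la) = (2*nb+1 + m*(2+la)) + (2+la))%N); last by nia.
  rewrite (_ : (m.+1 * (2 + la) = m*(2+la) + (2+la))%N); last by nia.
  rewrite ?mul0n ?muln0 ?add0n !exprD; ring.
rewrite !mulr0 addr0 (_ : (n.+1 * (2 + la) = (2*1+la) + n*(2+la))%N); last by nia.
rewrite !exprD; ring.
Qed.

End Pf.

Theorem theorem4p1 (q s : Cplx) :
  q != 0 -> s ^+ 2 = q ->
  (forall f : mono, Umul q s UK Unabla true f = Umul q s Unabla UK false f) /\
  (forall f : mono, Umul q s UK UN false f = Umul q s UN UK false f) /\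
  (forall f : mono, Umul q s Unabla UN false f = Umul q s UN Unabla true f) /\
  (forall f : mono, Umul q s Unabla Unabla true f = 0).
Proof.
move=> _ _; split; [|split; [|split]] => -[[k l] n]; rewrite !Umul_W !W_Delta; case: l.
- by rewrite !(it1 _ q) !(it2 _ q) /= addr0 add0r.
- by rewrite !(it1 _ q) !(it2 _ q) /=.
- by rewrite !(it3 _ q) !(it4 _ q) /= addr0 add0r !add0n.
- by rewrite !(it3 _ q) !(it4 _ q) /= !add0n.
- by rewrite !(it5 _ q) !(it6 _ q) /= expr0 mul1r addr0 add0r.
- by rewrite !(it5 _ q) !(it6 _ q) /=.
- by rewrite !(it7 _ q) ?addr0.
- by rewrite !(it7 _ q).
Qed.
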